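(* Let $\mathcal E,\mathcal D$ be sets, $K,\eta\in\mathbb N$, $\psi:\mathcal E^*\times[K]\to\mathbb R^\eta$ a function, and $\mathcal G$ a finite nonempty set of functions $\{+,-,0\}^K\to\mathcal D$. Then $\mathrm{Ndim}(\mathcal F_{\psi,\mathcal G})\le2\eta\log(8eK)+2\log|\mathcal G|=O(\eta\log K+\log|\mathcal G|)$.
   Context: $\mathcal E^*=\bigcup_{n\ge1}\mathcal E^n$. For $\vec w\in\mathbb R^\eta$ and $g\in\mathcal G$, $f_{\vec w,g}(P)=g(\mathrm{sign}(\psi(P,1)\cdot\vec w),\dots,\mathrm{sign}(\psi(P,K)\cdot\vec w))$, with sign values $+,-,0$; $\mathcal F_{\psi,\mathcal G}=\{f_{\vec w,g}:\vec w\in\mathbb R^\eta,g\in\mathcal G\}$. Natarajan dimension: a finite $\mathcal P\subseteq\mathcal E^*$ is shattered by $\mathcal F$ if there are $f^0,f^1:\mathcal E^*\to\mathcal D$ with $f^0(P)\ne f^1(P)$ on $\mathcal P$ such that for every $B\subseteq\mathcal P$ some $f\in\mathcal F$ equals $f^0$ on $B$ and $f^1$ on $\mathcal P\setminus B$; $\mathrm{Ndim}$ is the largest size of a shattered set. Logarithms are base 2. *)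

(* Defs.v *)
From mathcomp Require Import all_boot all_order all_algebra.
From mathcomp Require Import all_classical all_reals all_analysis.
Set Implicit Arguments. Unset Strict Implicit. Unset Printing Implicit Defensive.
Import Order.TTheory GRing.Theory Num.Theory.
Local Open Scope ring_scope.

Inductive sgn := SPlus | SMinus | SZero.

Definition sign {R : realType} (x : R) : sgn :=
  if 0 < x then SPlus else if x < 0 then SMinus else SZero.

Definition dotp {R : realType} (eta : nat) (u v : 'I_eta -> R) : R :=
  \sum_(i < eta) u i * v i.

(* f_{w,g}(P) = g(sign(psi(P,1).w), ..., sign(psi(P,K).w)).
   Elements of E^* are represented by (nonempty) sequences [seq E]. *)
Definition f_wg {R : realType} {E D : Type} (K eta : nat)
  (psi : seq E -> 'I_K -> 'I_eta -> R) (w : 'I_eta -> R)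
  (g : ('I_K -> sgn) -> D) : seq E -> D :=
  fun P => g (fun k => sign (dotp (psi P k) w)).

(* The class F_{psi,G}, where G = { g i | i < m } (g injective). *)
Definition Fclass {R : realType} {E D : Type} (K eta m : nat)
  (psi : seq E -> 'I_K -> 'I_eta -> R) (g : 'I_m -> ('I_K -> sgn) -> D)
  (f : seq E -> D) : Prop :=
  exists (w : 'I_eta -> R) (i : 'I_m), f = f_wg psi w (g i).

Definition N_shattered {E D : Type} (F : (seq E -> D) -> Prop)
  (n : nat) (p : 'I_n -> seq E) : Prop :=
  (forall i, p i <> [::]) /\ injective p /\
  exists f0 f1 : seq E -> D,
    (forall i, f0 (p i) <> f1 (p i)) /\
    forall B : {set 'I_n}, exists f, F f /\
      forall i, (i \in B -> f (p i) = f0 (p i)) /\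
                (i \notin B -> f (p i) = f1 (p i)).

Definition log2 {R : realType} (x : R) : R := ln x / ln 2.

(* Main.v *)
Require Import Defs.
From HB Require Import structures.
From mathcomp Require Import all_boot all_order all_algebra.
From mathcomp Require Import all_classical all_reals all_analysis.
From mathcomp Require Import ring lra zify.
Import Order.TTheory GRing.Theory Num.Theory.
Local Open Scope ring_scope.

Definition sgn2o (s : sgn) : 'I_3 :=
  match s with SPlus => inord 0 | SMinus => inord 1 | SZero => inord 2 end.
Definition o2sgn (i : 'I_3) : sgn :=
  match val i with 0 => SPlus | 1 => SMinus | _ => SZero end.
Lemma sgn2oK : cancel sgn2o o2sgn.
Proof. by case; rewrite /o2sgn /= inordK. Qed.
HB.instance Definition _ := Equality.copy sgn (can_type sgn2oK).
HB.instance Definition _ := Choice.copy sgn (can_type sgn2oK).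
HB.instance Definition _ := Countable.copy sgn (can_type sgn2oK).
HB.instance Definition _ := Finite.copy sgn (can_type sgn2oK).

Lemma card_sgn : (#|{: sgn}| <= 3)%N.
Proof. by rewrite -[3%N]card_ord; apply: leq_card; apply: can_inj sgn2oK. Qed.

Fixpoint Sb (N d : nat) : nat :=
  match N, d with
  | 0, _ => 1
  | N'.+1, 0 => 1
  | N'.+1, d'.+1 => Sb N' d + 2 * Sb N' d'
  end.

Lemma Sb0 N : Sb N 0 = 1%N. Proof. by case: N. Qed.
Lemma Sb_mond N d : (Sb N d <= Sb N d.+1)%N.
Proof.
elim: N d => [|N IH] [|d] //=; first by rewrite Sb0 addn2.
by rewrite leq_add // leq_mul2l IH orbT.
Qed.
Lemma Sb_mond' N d d' : (d <= d')%N -> (Sb N d <= Sb N d')%N.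
Proof.
move=> /subnK <-; elim: (d' - d)%N => //= k IH.
by rewrite addSn (leq_trans IH) // Sb_mond.
Qed.
Lemma Sb_monN N d : (Sb N d <= Sb N.+1 d)%N.
Proof. by case: d => [|d] /=; rewrite ?Sb0 ?leq_addr. Qed.

Lemma Sb_real (R : realType) N d (x : R) : 0 <= x -> x <= 1 ->
  (Sb N d)%:R * x ^+ d <= (1 + 2 * x) ^+ N.
Proof.
move=> x0 x1; elim: N d => [|N IH] [|d] /=.
- by rewrite expr0 mulr1.
- by rewrite mul1r exprn_ile1.
- by rewrite mul1r expr0 exprn_ege1 // lerDl mulr_ge0.
have h1 := IH d.+1; have h2 := IH d.
rewrite natrD natrM exprS; rewrite exprS in h1.
have h3 : 0 <= x * ((1 + 2 * x) ^+ N - (Sb N d)%:R * x ^+ d).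
  by rewrite mulr_ge0 // subr_ge0.
rewrite exprS; nra.
Qed.

Lemma sign_cases (R : realType) (x : R) :
  (0 < x /\ sign x = SPlus) \/ (x < 0 /\ sign x = SMinus) \/ (x = 0 /\ sign x = SZero).
Proof.
rewrite /sign; case: (ltrgt0P x) => h.
- by left.
- by right; left.
- by right; right.
Qed.

Lemma sign_comb (R : realType) (a b al be : R) : sign a = sign b -> 0 < al -> 0 < be ->
  sign (al * a + be * b) = sign a.
Proof.
move=> e hal hbe.
have [[ha sa]|[[ha sa]|[ha sa]]] := sign_cases _ a;
have [[hb sb]|[[hb sb]|[hb sb]]] := sign_cases _ b;
have [[hc sc]|[[hc sc]|[hc sc]]] := sign_cases _ (al * a + be * b);
rewrite ?sa ?sc; rewrite ?sa ?sb in e; try discriminate; try reflexivity; exfalso; nra.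
Qed.

Set Implicit Arguments. Unset Strict Implicit.

Section Count.
Variable R : realType.

Definition pat r N (C : 'M[R]_(r, N)) (u : 'rV[R]_r) : {ffun 'I_N -> sgn} :=
  [ffun t => sign ((u *m C) 0 t)].
Definition Pat r N (C : 'M[R]_(r, N)) : {set {ffun 'I_N -> sgn}} :=
  [set s | `[< exists u, pat C u = s >]].

Lemma PatP r N (C : 'M[R]_(r, N)) s : reflect (exists u, pat C u = s) (s \in Pat C).
Proof. by rewrite inE; apply: (iffP (asboolP _)). Qed.

Definition res N (s : {ffun 'I_(1 + N) -> sgn}) : {ffun 'I_N -> sgn} :=
  [ffun t => s (rshift 1 t)].
Definition hd N (s : {ffun 'I_(1 + N) -> sgn}) : sgn := s (lshift N ord0).

Lemma hd_res_inj N (s1 s2 : {ffun 'I_(1 + N) -> sgn}) :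
  hd s1 = hd s2 -> res s1 = res s2 -> s1 = s2.
Proof.
move=> eh er; apply/ffunP => i; case: (splitP i) => [j ej|k ek].
- have -> : i = lshift N j by apply: val_inj.
  by rewrite (ord1 j).
- have -> : i = rshift 1 k by apply: val_inj.
  by move/ffunP: er => /(_ k); rewrite !ffunE.
Qed.

Lemma pat_hd r N (c : 'M[R]_(r, 1)) (D : 'M[R]_(r, N)) (u : 'rV[R]_r) :
  hd (pat (row_mx c D) u) = sign ((u *m c) 0 0).
Proof. by rewrite /hd ffunE mul_mx_row row_mxEl. Qed.

Lemma pat_res r N (c : 'M[R]_(r, 1)) (D : 'M[R]_(r, N)) (u : 'rV[R]_r) :
  res (pat (row_mx c D) u) = pat D u.
Proof. by apply/ffunP => t; rewrite !ffunE mul_mx_row row_mxEr. Qed.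

Lemma rank_r r N (c : 'M[R]_(r, 1)) (D : 'M[R]_(r, N)) :
  (\rank D <= \rank (row_mx c D))%N.
Proof.
have e : D = row_mx c D *m col_mx 0 1%:M by rewrite mul_row_col mulmx0 mulmx1 add0r.
rewrite {1}e.
exact: mxrankM_maxl.
Qed.

Lemma rank_ker r N (c : 'M[R]_(r, 1)) (D : 'M[R]_(r, N)) : c != 0 ->
  (\rank (kermx c *m D) < \rank (row_mx c D))%N.
Proof.
move=> cn0.
have -> : kermx c *m D = kermx c *m row_mx c D *m col_mx 0 1%:M.
  by rewrite -mulmxA mul_row_col mulmx0 mulmx1 add0r.
apply: leq_ltn_trans (mxrankM_maxl _ _) _.
apply: rank_ltmx; rewrite ltmxE submxMl /=; apply/negP => /submxP [X eX].
move/eqP: cn0; apply.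
have e : c = row_mx c D *m col_mx 1%:M 0 by rewrite mul_row_col mulmx0 mulmx1 addr0.
rewrite {1}e.
have hK : kermx c *m row_mx c D *m col_mx 1%:M 0 = 0.
  by rewrite -mulmxA mul_row_col mulmx0 mulmx1 addr0 mulmx_ker.
by rewrite {1}eX -mulmxA hK mulmx0.
Qed.


Lemma mx11_0 r (u : 'rV[R]_r) (c : 'M[R]_(r, 1)) : (u *m c) 0 0 = 0 -> u *m c = 0.
Proof. by move=> h; apply/matrixP => i j; rewrite !ord1 h mxE. Qed.

Lemma opp_contra r N (c : 'M[R]_(r, 1)) (D : 'M[R]_(r, N)) (u1 u2 : 'rV[R]_r) :
  pat D u1 = pat D u2 -> (u1 *m c) 0 0 * (u2 *m c) 0 0 < 0 ->
  exists u, u *m c = 0 /\ pat D u = pat D u1.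
Proof.
move=> ep hneg.
have E : forall k (A B : 'M[R]_(1, k)) (x y : R) t, (x *: A + y *: B) 0 t = x * A 0 t + y * B 0 t.
  by move=> *; rewrite !mxE.
set a1 := (u1 *m c) 0 0; set a2 := (u2 *m c) 0 0.
rewrite -/a1 -/a2 in hneg.
have hp : 0 < `|a1| /\ 0 < `|a2|.
  by split; rewrite normr_gt0; apply/eqP => h; move: hneg; rewrite h ?mul0r ?mulr0 ltxx.
exists (`|a2| *: u1 + `|a1| *: u2); split.
  apply: mx11_0; rewrite mulmxDl -!scalemxAl E -/a1 -/a2.
  have [h1|h1] := ltrP 0 a1.
    have h2 : a2 < 0 by rewrite -(pmulr_rlt0 _ h1).
    by rewrite (gtr0_norm h1) (ltr0_norm h2); ring.
  have h1' : a1 < 0 by rewrite lt_neqAle h1 andbT; apply/eqP => h; move: hneg; rewrite h mul0r ltxx.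
  have h2 : 0 < a2 by rewrite -(nmulr_rlt0 _ h1').
  by rewrite (ltr0_norm h1') (gtr0_norm h2); ring.
apply/ffunP => t; rewrite !ffunE mulmxDl -!scalemxAl E.
apply: sign_comb; try by case: hp.
by move/ffunP: ep => /(_ t); rewrite !ffunE.
Qed.


Lemma hd_eq r N (c : 'M[R]_(r, 1)) (D : 'M[R]_(r, N)) (u1 u2 : 'rV[R]_r) :
  pat D u1 = pat D u2 ->
  ~ (exists u, u *m c = 0 /\ pat D u = pat D u1) ->
  sign ((u1 *m c) 0 0) = sign ((u2 *m c) 0 0).
Proof.
move=> ep nQ.
have z1 : (u1 *m c) 0 0 <> 0.
  by move=> h; apply: nQ; exists u1; split => //; apply: mx11_0.
have z2 : (u2 *m c) 0 0 <> 0.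
  by move=> h; apply: nQ; exists u2; split; [apply: mx11_0 | rewrite ep].
have [[ha sa]|[[ha sa]|[ha sa]]] := sign_cases _ ((u1 *m c) 0 0);
have [[hb sb]|[[hb sb]|[hb sb]]] := sign_cases _ ((u2 *m c) 0 0);
rewrite ?sa ?sb //; try (exfalso; by [apply: z1|apply: z2]);
exfalso; apply: nQ; apply: (opp_contra ep); nra.
Qed.

Lemma Pat_bound N : forall r (C : 'M[R]_(r, N)), (#|Pat C| <= Sb N (\rank C))%N.
Proof.
elim: N => [|N IH] r C.
  apply: leq_trans (max_card _) _.
  by rewrite card_ffun card_ord expn0.
have eC := hsubmxK (C : 'M[R]_(r, 1 + N)).
move: eC; set c := lsubmx _; set D := rsubmx _ => eC.
rewrite -eC; clearbody c D; clear eC C.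
have PD : forall s, s \in Pat (row_mx c D) -> res s \in Pat D.
  by move=> _ /PatP [u <-]; apply/PatP; exists u; rewrite pat_res.
case: (eqVneq c 0) => [c0|cn0].
  have inj : {in Pat (row_mx c D) &, injective (@res N)}.
    move=> s1 s2 /PatP [u1 <-] /PatP [u2 <-] er; apply: hd_res_inj => //.
    by rewrite !pat_hd c0 !mulmx0 mxE.
  rewrite -(card_in_imset inj).
  apply: (@leq_trans #|Pat D|).
    by apply: subset_leq_card; apply/fintype.subsetP => _ /imsetP [s hs ->]; exact: PD.
  apply: leq_trans (IH _ D) _; apply: leq_trans (Sb_monN _ _).
  exact: Sb_mond' (rank_r _ _).
set Q := [set t | `[< exists u, u *m c = 0 /\ pat D u = t >]].
set P := Pat (row_mx c D).
set Bs := [set s | res s \in Q].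
have QP : Q \subset Pat D.
  by apply/fintype.subsetP => t; rewrite inE => /asboolP [u [_ <-]]; apply/PatP; exists u.
have QK : (#|Q| <= #|Pat (kermx c *m D)|)%N.
  apply: subset_leq_card; apply/fintype.subsetP => t; rewrite inE => /asboolP [u [uc <-]].
  apply/PatP; exists (u *m pinvmx (kermx c)).
  have uK : (u <= kermx c)%MS by rewrite sub_kermx uc.
  by rewrite /pat mulmxA mulmxKpV.
have hA : (#|P :\: Bs| <= #|Pat D :\: Q|)%N.
  have inj : {in P :\: Bs &, injective (@res N)}.
    move=> s1 s2; rewrite !inE => /andP [nB1 /asboolP [u1 e1]] /andP [nB2 /asboolP [u2 e2]] er.
    subst s1 s2; apply: hd_res_inj => //; rewrite !pat_hd.
    move: er; rewrite !pat_res => er; apply: (hd_eq (D := D)) => // -[u [uc eu]].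
    by move/negP: nB1; apply; apply/asboolP; exists u; rewrite pat_res eu.
  rewrite -(card_in_imset inj); apply: subset_leq_card; apply/fintype.subsetP => x /imsetP [s].
  rewrite !inE => /andP [nB /asboolP [u e]] ->.
  rewrite nB /=.
  by apply/asboolP; exists u; rewrite -e pat_res.
have hB : (#|P :&: Bs| <= 3 * #|Q|)%N.
  have inj : injective (fun s => (@hd N s, res s)).
    by move=> s1 s2 [] h1 h2; apply: hd_res_inj.
  rewrite -(card_imset _ inj).
  apply: (@leq_trans #|finset.setX [set: sgn] Q|).
    apply: subset_leq_card; apply/fintype.subsetP => x /imsetP [s].
    rewrite !inE => /andP [_ /asboolP hQ] ->; exact: hQ.
  by rewrite finset.cardsX cardsT leq_mul2r card_sgn orbT.
have hsplit := cardsID Bs P.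
have hD : #|Pat D :\: Q| = (#|Pat D| - #|Q|)%N by rewrite cardsD (finset.setIidPr QP).
have rk : (\rank (kermx c *m D) < \rank (row_mx c D))%N by apply: rank_ker.
have r1 : (\rank D <= \rank (row_mx c D))%N by apply: rank_r.
have h3 : (#|Q| <= #|Pat D|)%N := subset_leq_card QP.
move: rk r1; case e: (\rank (row_mx c D)) => [|d] // rk r1.
have h1 : (#|Pat D| <= Sb N d.+1)%N := leq_trans (IH _ D) (Sb_mond' _ _ _ r1).
have h2 : (#|Q| <= Sb N d)%N := leq_trans QK (leq_trans (IH _ _) (Sb_mond' _ _ _ (rk : (\rank (kermx c *m D) <= d)%N))).
rewrite /=; apply: (@leq_trans ((#|Pat D| - #|Q|) + 3 * #|Q|)%N).
  by rewrite -hsplit addnC -hD leq_add.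
move: h1 h2 h3; clear; lia.
Qed.

End Count.

Section Real.
Variable R : realType.

Lemma ln2_ge : (1 / 2 : R) <= ln 2.
Proof.
have h := @le_ln1Dx R (- (1/2)) ltac:(lra).
have e : (1 + - (1/2) : R) = 2^-1 by lra.
rewrite e lnV ?posrE // in h; lra.
Qed.

Lemma ln_pos_le (x y : R) : 0 < x -> x <= y -> ln x <= ln y.
Proof. by move=> x0 xy; rewrite ler_ln ?posrE // (lt_le_trans x0 xy). Qed.

Lemma real_part n K eta m : (0 < m)%N -> (2 ^ n <= m * Sb (n * K) eta)%N ->
  (n%:R : R) <= 2 * eta%:R * log2 (8 * expR 1 * K%:R) + 2 * log2 (m%:R : R).
Proof.
move=> m0 hc.
have l2 : (0 : R) < ln 2 by apply: ln_gt0; lra.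
have l2' := ln2_ge.
have mR : (1 : R) <= m%:R by rewrite ler1n.
have lm : (0 : R) <= ln m%:R by apply: ln_ge0.
have S0 : (0 < Sb (n * K) eta)%N.
  by move: hc; case: (Sb _ _) => //; rewrite muln0 leqn0 expn_eq0.
have SR : (1 : R) <= (Sb (n * K) eta)%:R by rewrite ler1n.
have base : n%:R * ln 2 <= ln (m%:R : R) + ln ((Sb (n * K) eta)%:R : R).
  rewrite -lnM ?posrE; try lra.
  have : ((2 ^ n)%:R : R) <= (m * Sb (n * K) eta)%:R by rewrite ler_nat.
  rewrite natrX natrM => /(ln_pos_le (exprn_gt0 _ _)) h.
  by rewrite mulr_natl -lnXn //; apply: h.
suff : n%:R * ln 2 <= 2 * eta%:R * ln (8 * expR 1 * K%:R) + 2 * ln (m%:R : R).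
  move=> h; rewrite /log2.
  rewrite -ler_pdivlMr // in h.
  by apply: (le_trans h); rewrite mulrDl !mulrA.
have l8 : ln (8 : R) = 3 * ln 2.
  by rewrite (_ : (8 : R) = 2 ^+ 3) ?lnXn // ?mulr_natl //; lra.
have [eK|] := boolP ((eta == 0) || (K == 0))%N.
  have S1 : Sb (n * K) eta = 1%N.
    by case/orP: eK => /eqP ->; rewrite ?Sb0 ?muln0.
  rewrite S1 ln1 addr0 in base.
  have : 0 <= eta%:R * ln (8 * expR 1 * K%:R :> R).
    case/orP: eK => /eqP ->; first by rewrite mul0r.
    by rewrite mulr0 ln0 ?mulr0.
  lra.
rewrite negb_or => /andP [e0 K0].
have K1 : (1 : R) <= K%:R by rewrite ler1n lt0n.
have e1 : (1 : R) <= eta%:R by rewrite ler1n lt0n.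
have lK : (0 : R) <= ln K%:R by apply: ln_ge0.
have lX : ln (8 * expR 1 * K%:R) = 3 * ln 2 + 1 + ln (K%:R : R).
  rewrite lnM ?posrE ?mulr_gt0 ?expR_gt0 //; try lra.
  by rewrite lnM ?posrE ?expR_gt0 // ?expRK ?l8 //; lra.
rewrite lX.
have [lt|ge] := ltnP (n * K) eta.
  have hn : (n%:R : R) <= eta%:R.
    rewrite ler_nat; apply: leq_trans (ltnW lt); by rewrite leq_pmulr // lt0n.
  have h1 : 0 <= (eta%:R - n%:R) * ln 2 :> R by rewrite mulr_ge0 //; lra.
  have h2 : 0 <= eta%:R * ln 2 :> R by rewrite mulr_ge0 //; lra.
  have h3 : 0 <= eta%:R * ln K%:R :> R by rewrite mulr_ge0 //; lra.
  nra.
have NR : (eta%:R : R) <= (n * K)%:R by rewrite ler_nat.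
have N0 : (0 : R) < (n * K)%:R by lra.
have n0 : (0 < n)%N by move: N0; rewrite ltr0n muln_gt0 => /andP [].
have nR : (1 : R) <= n%:R by rewrite ler1n.
set x : R := eta%:R / (n * K)%:R.
have x0 : 0 < x by rewrite divr_gt0 //; lra.
have x1 : x <= 1 by rewrite ler_pdivrMr // mul1r.
have hS := @Sb_real R (n * K) eta x (ltW x0) x1.
have hE : (1 + 2 * x) ^+ (n * K) <= expR (2 * eta%:R).
  apply: (le_trans (y := expR (2 * x) ^+ (n * K))).
    by rewrite lerXn2r ?nnegrE ?expR_ge0 ?expR_ge1Dx //; lra.
  rewrite -expRM_natl.
  have -> : (n * K)%:R * (2 * x) = 2 * eta%:R by rewrite /x; field; lra.
  by [].
have F2 : ln (Sb (n * K) eta)%:R + eta%:R * (ln eta%:R - ln n%:R - ln K%:R) <= 2 * eta%:R :> R.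
  have h := le_trans hS hE.
  have := ln_pos_le (mulr_gt0 (lt_le_trans ltr01 SR) (exprn_gt0 _ x0)) h.
  rewrite expRK lnM ?posrE ?exprn_gt0 //; last lra.
  rewrite lnXn // /x ln_div ?posrE //; try lra.
  by rewrite natrM lnM ?posrE; try lra; rewrite -mulr_natl.
have F3 : eta%:R * (ln n%:R - 3 * ln 2 - ln eta%:R) <= n%:R / 8 - eta%:R :> R.
  have q0 : (0 : R) < n%:R / (8 * eta%:R) by rewrite divr_gt0 //; lra.
  have h := @le_ln1Dx R (n%:R / (8 * eta%:R) - 1) ltac:(lra).
  rewrite addrC subrK ln_div ?posrE in h; try lra.
  rewrite lnM ?posrE -?l8 in h; try lra.
  have : eta%:R * (ln n%:R - (ln 8 + ln eta%:R)) <= eta%:R * (n%:R / (8 * eta%:R) - 1) :> R.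
    by rewrite ler_wpM2l //; lra.
  have -> : eta%:R * (n%:R / (8 * eta%:R) - 1) = n%:R / 8 - eta%:R :> R by field; lra.
  rewrite l8; lra.
have F4 : n%:R / 2 <= n%:R * ln 2 :> R.
  have := ler_wpM2l (ler0n R n) l2'; lra.
lra.
Qed.
End Real.

Unset Implicit Arguments. Set Strict Implicit.

Theorem theorem11 (R : realType) (E D : Type) (K eta m : nat)
  (psi : seq E -> 'I_K -> 'I_eta -> R)
  (g : 'I_m -> ('I_K -> sgn) -> D) (g_inj : injective g) (m_pos : (0 < m)%N)
  (n : nat) (p : 'I_n -> seq E) :
  N_shattered (Fclass psi g) p ->
  (n%:R : R) <= 2 * eta%:R * log2 (8 * expR 1 * K%:R) + 2 * log2 (m%:R : R).
Proof.
move=> [_ [_ [f0 [f1 [hf01 hB]]]]].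
apply: real_part => //.
pose T := ('I_n * 'I_K)%type.
pose C : 'M[R]_(eta, #|{: T}|) :=
  \matrix_(a, t) psi (p (enum_val t).1) (enum_val t).2 a.
pose F (x : 'I_m * {ffun 'I_#|{: T}| -> sgn}) : {set 'I_n} :=
  [set j | `[< g x.1 (fun k => x.2 (enum_rank (j, k))) = f0 (p j) >]].
have cov : powerset [set: 'I_n] \subset F @: finset.setX [set: 'I_m] (Pat C).
  apply/fintype.subsetP => B _.
  have [f [[w [i ->]] hf]] := hB B.
  apply/imsetP; exists (i, pat C (\row_a w a)).
    by rewrite finset.in_setX finset.in_setT /=; apply/PatP; exists (\row_a w a).
  have key : forall j, (fun k => pat C (\row_a w a) (enum_rank (j, k))) =
                       (fun k => sign (dotp (psi (p j) k) w)).
    move=> j; apply: funext => k; rewrite ffunE mxE /dotp; congr sign.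
    by apply: eq_bigr => a _; rewrite !mxE enum_rankK mulrC.
  apply/setP => j; rewrite inE key.
  have [hj|hj] := boolP (j \in B).
    by apply/esym/asboolP; have [h1 _] := hf j; exact: (h1 hj).
  apply/esym/negP => /asboolP h; apply: (hf01 j).
  have [_ h2] := hf j; rewrite -h.
exact: (h2 hj).
have := subset_leq_card cov.
rewrite card_powerset cardsT card_ord => h.
apply: leq_trans h _; apply: leq_trans (leq_imset_card _ _) _.
rewrite finset.cardsX cardsT card_ord leq_mul2l; apply/orP; right.
have eT : #|{: T}| = (n * K)%N by rewrite card_prod !card_ord.
have hP := Pat_bound C; rewrite -eT.
apply: leq_trans hP _; apply: Sb_mond'; exact: rank_leq_row.
Qed.
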